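(* Let $A=\mathcal{W}(H,\theta,z_0,z_1)$ be a triangular generalized Weyl algebra, and give $A$ the $\mathbb{Z}$-grading with $\deg u=1$, $\deg d=-1$, $\deg H=0$; let $A[m]$ denote its degree-$m$ component. Then for every $m\in\mathbb{Z}$, $A[m]$ is isomorphic to $H[du]$ as a left $H[du]$-module.
   Context: $\mathbb{F}$ is a field, $H$ a commutative $\mathbb{F}$-algebra, $\theta:H\to H$ an $\mathbb{F}$-algebra automorphism, $z_0\in H$, $z_1\in H^\times$, and $\mathcal{W}(H,\theta,z_0,z_1):=H\langle d,u\rangle/(uh=\theta(h)u,\ hd=d\theta(h),\ ud=z_0+dz_1u\ \forall h\in H)$. Here $H[du]$ denotes the subalgebra of $A$ generated by $H$ and $du$ (which commutes with $H$). *)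

(* Defs.v *)
From HB Require Import structures.
From Stdlib Require List.
From mathcomp Require Import all_boot all_order all_algebra.
Set Implicit Arguments. Unset Strict Implicit. Unset Printing Implicit Defensive.
Import GRing.Theory.
Local Open Scope ring_scope.

Definition is_alg_hom (F : fieldType) (A B : algType F) (f : A -> B) : Prop :=
  [/\ forall (a : F) (x y : A), f (a *: x + y) = a *: f x + f y,
      f 1 = 1 &
      forall x y : A, f (x * y) = f x * f y].

Definition gwa_rel (F : fieldType) (H : comAlgType F) (theta : H -> H)
    (z0 z1 : H) (B : algType F) (iota : H -> B) (d u : B) : Prop :=
  [/\ forall h : H, u * iota h = iota (theta h) * u,
      forall h : H, iota h * d = d * iota (theta h) &
      u * d = iota z0 + d * iota z1 * u].

(* Universal property of the algebra presented by generators H, d, u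
   and the relations above: (A, iota, d, u) is initial. *)
Definition gwa_universal (F : fieldType) (H : comAlgType F) (theta : H -> H)
    (z0 z1 : H) (A : algType F) (iota : H -> A) (d u : A) : Prop :=
  forall (B : algType F) (iotaB : H -> B) (dB uB : B),
    is_alg_hom iotaB -> gwa_rel theta z0 z1 iotaB dB uB ->
    exists f : A -> B,
      [/\ is_alg_hom f, (forall h, f (iota h) = iotaB h), f d = dB, f u = uB &
          forall g : A -> B, is_alg_hom g -> (forall h, g (iota h) = iotaB h) ->
            g d = dB -> g u = uB -> forall x, g x = f x].

Definition is_gwa (F : fieldType) (H : comAlgType F) (theta : H -> H)
    (z0 z1 : H) (A : algType F) (iota : H -> A) (d u : A) : Prop :=
  is_alg_hom iota /\ gwa_rel theta z0 z1 iota d u /\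
  gwa_universal theta z0 z1 iota d u.

Inductive gletter (H : Type) := LH of H | LD | LU.
Arguments LD {H}. Arguments LU {H}.

Definition gletter_eval (F : fieldType) (H : comAlgType F) (A : algType F)
    (iota : H -> A) (d u : A) (l : gletter H) : A :=
  match l with LH h => iota h | LD => d | LU => u end.

Definition gword_eval (F : fieldType) (H : comAlgType F) (A : algType F)
    (iota : H -> A) (d u : A) (w : seq (gletter H)) : A :=
  foldr (fun l acc => gletter_eval iota d u l * acc) 1 w.

Definition gletter_deg (H : Type) (l : gletter H) : int :=
  match l with LH _ => 0 | LD => -1 | LU => 1 end.

Definition gword_deg (H : Type) (w : seq (gletter H)) : int :=
  \sum_(l <- w) gletter_deg l.

Definition gwa_comp (F : fieldType) (H : comAlgType F) (A : algType F)
    (iota : H -> A) (d u : A) (m : int) (a : A) : Prop :=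
  exists s : seq (F * seq (gletter H)),
    List.Forall (fun p => gword_deg p.2 = m) s /\
    a = \sum_(p <- s) p.1 *: gword_eval iota d u p.2.

(* H[du]: the subalgebra of A generated by iota(H) and du. *)
Definition Hdu_eval (F : fieldType) (H : comAlgType F) (A : algType F)
    (iota : H -> A) (d u : A) (w : seq (option H)) : A :=
  foldr (fun o acc => (match o with Some h => iota h | None => d * u end) * acc) 1 w.

Definition in_Hdu (F : fieldType) (H : comAlgType F) (A : algType F)
    (iota : H -> A) (d u : A) (a : A) : Prop :=
  exists s : seq (F * seq (option H)),
    a = \sum_(p <- s) p.1 *: Hdu_eval iota d u p.2.

Definition left_mod_iso (A : ringType) (R P Q : A -> Prop) (phi : A -> A) : Prop :=
  [/\ forall x, P x -> Q (phi x),
      forall x y, P x -> P y -> phi (x + y) = phi x + phi y,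
      forall r x, R r -> P x -> phi (r * x) = r * phi x,
      forall x y, P x -> P y -> phi x = phi y -> x = y &
      forall y, Q y -> exists2 x, P x & phi x = y].

Definition is_unit_elt (R : comRingType) (x : R) : Prop := exists y : R, x * y = 1.

(* Main.v *)
Require Import Defs.
From HB Require Import structures.
From mathcomp Require Import all_boot all_order all_algebra.
From mathcomp Require Import boolp.
From mathcomp Require Import ring zify.
From Stdlib Require Import FunctionalExtensionality ProofIrrelevance.
Set Implicit Arguments. Unset Strict Implicit. Unset Printing Implicit Defensive.
Import GRing.Theory.
Local Open Scope ring_scope.

Section Vec.
Context (F : fieldType) (H : comAlgType F).
Definition VV := nat -> nat -> H.
Definition vadd (x y : VV) : VV := fun i j => x i j + y i j.
Definition vopp (x : VV) : VV := fun i j => - x i j.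
Definition vzero : VV := fun _ _ => 0.
Definition vscale (a : F) (x : VV) : VV := fun i j => a *: x i j.
Definition islin (f : VV -> VV) : Prop :=
  (forall x y, f (vadd x y) = vadd (f x) (f y)) /\
  (forall a x, f (vscale a x) = vscale a (f x)).
Record Op := mkOp { opf :> VV -> VV; opP : islin opf }.

Lemma op_ext (f g : Op) : (forall v i j, f v i j = g v i j) -> f = g.
Proof.
move: f g => [f fP] [g gP] /= E.
have efg : f = g.
  by apply: functional_extensionality => v; do 2 apply: functional_extensionality => ?; apply: E.
subst g; congr mkOp; apply: proof_irrelevance.
Qed.

Lemma vext (x y : VV) : (forall i j, x i j = y i j) -> x = y.
Proof. by move=> E; do 2 apply: functional_extensionality => ?; apply: E. Qed.

Lemma op_add (f : Op) x y : f (vadd x y) = vadd (f x) (f y).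
Proof. by case: f => f [A B]. Qed.
Lemma op_scale (f : Op) a x : f (vscale a x) = vscale a (f x).
Proof. by case: f => f [A B]. Qed.

Lemma op_zero (f : Op) : f vzero = vzero.
Proof.
have -> : vzero = vscale 0 vzero by apply: vext => i j; rewrite /vscale scale0r.
by rewrite op_scale; apply: vext => i j; rewrite /vscale !scale0r.
Qed.
Lemma op_opp (f : Op) x : f (vopp x) = vopp (f x).
Proof.
have -> : vopp x = vscale (-1) x by apply: vext => i j; rewrite /vscale scaleN1r.
by rewrite op_scale; apply: vext => i j; rewrite /vscale /vopp !scaleN1r.
Qed.

Definition Oadd_f (f g : Op) : VV -> VV := fun v => vadd (f v) (g v).
Lemma Oadd_lin f g : islin (Oadd_f f g).
Proof.
split=> [x y|a x]; apply: vext => i j; rewrite /Oadd_f.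
  by rewrite (op_add f) (op_add g) /vadd addrACA.
by rewrite (op_scale f) (op_scale g) /vadd /vscale scalerDr.
Qed.
Definition Oadd f g := mkOp (Oadd_lin f g).
Definition Oopp_f (f : Op) : VV -> VV := fun v => vopp (f v).
Lemma Oopp_lin f : islin (Oopp_f f).
Proof.
split=> [x y|a x]; apply: vext => i j; rewrite /Oopp_f.
  by rewrite (op_add f) /vopp /vadd opprD.
by rewrite (op_scale f) /vopp /vscale scalerN.
Qed.
Definition Oopp f := mkOp (Oopp_lin f).
Lemma Ozero_lin : islin (fun _ => vzero).
Proof. by split=> *; apply: vext => i j; rewrite /vzero /vadd /vscale ?addr0 ?scaler0. Qed.
Definition Ozero := mkOp Ozero_lin.
Lemma Oone_lin : islin id.
Proof. by split. Qed.
Definition Oone := mkOp Oone_lin.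
Definition Omul_f (f g : Op) : VV -> VV := fun v => f (g v).
Lemma Omul_lin f g : islin (Omul_f f g).
Proof. by split=> *; rewrite /Omul_f ?(op_add g) ?(op_add f) ?(op_scale g) ?(op_scale f). Qed.
Definition Omul f g := mkOp (Omul_lin f g).
Definition Oscale_f (a : F) (f : Op) : VV -> VV := fun v => vscale a (f v).
Lemma Oscale_lin a f : islin (Oscale_f a f).
Proof.
split=> [x y|b x]; apply: vext => i j; rewrite /Oscale_f.
  by rewrite (op_add f) /vadd /vscale scalerDr.
rewrite (op_scale f) /vscale.
by rewrite !scalerA mulrC.
Qed.
Definition Oscale a f := mkOp (Oscale_lin a f).

HB.instance Definition _ := gen_eqMixin Op.
HB.instance Definition _ := gen_choiceMixin Op.

Lemma OaddA : associative Oadd.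
Proof. by move=> *; apply: op_ext => *; rewrite /= /Oadd_f /vadd addrA. Qed.
Lemma OaddC : commutative Oadd.
Proof. by move=> *; apply: op_ext => *; rewrite /= /Oadd_f /vadd addrC. Qed.
Lemma Oadd0 : left_id Ozero Oadd.
Proof. by move=> *; apply: op_ext => *; rewrite /= /Oadd_f /vadd /vzero add0r. Qed.
Lemma OaddN : left_inverse Ozero Oopp Oadd.
Proof. by move=> *; apply: op_ext => *; rewrite /= /Oadd_f /Oopp_f /vadd /vopp /vzero addNr. Qed.
HB.instance Definition _ := GRing.isZmodule.Build Op OaddA OaddC Oadd0 OaddN.

Lemma OmulA : associative Omul.
Proof. by move=> *; apply: op_ext. Qed.
Lemma Omul1 : left_id Oone Omul.
Proof. by move=> *; apply: op_ext. Qed.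
Lemma Omulr1 : right_id Oone Omul.
Proof. by move=> *; apply: op_ext. Qed.
Lemma OmulDl : left_distributive Omul Oadd.
Proof. by move=> *; apply: op_ext. Qed.
Lemma OmulDr : right_distributive Omul Oadd.
Proof. by move=> f g h; apply: op_ext => v i j; rewrite /= /Omul_f /Oadd_f (op_add f). Qed.
Lemma Oone_neq0 : Oone != Ozero.
Proof.
apply/eqP => E.
have := congr1 (fun f : Op => f (fun _ _ => 1) 0%N 0%N) E.
by rewrite /= /vzero; apply/eqP; rewrite oner_neq0.
Qed.
HB.instance Definition _ := GRing.Zmodule_isNzRing.Build Op OmulA Omul1 Omulr1 OmulDl OmulDr Oone_neq0.

Lemma OscaleA a b v : Oscale a (Oscale b v) = Oscale (a * b) v.
Proof. by apply: op_ext => *; rewrite /= /Oscale_f /vscale scalerA. Qed.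
Lemma Oscale1 : left_id 1 Oscale.
Proof. by move=> *; apply: op_ext => *; rewrite /= /Oscale_f /vscale scale1r. Qed.
Lemma OscaleDr : right_distributive Oscale Oadd.
Proof. by move=> *; apply: op_ext => *; rewrite /= /Oscale_f /Oadd_f /vscale /vadd scalerDr. Qed.
Lemma OscaleDl v : {morph Oscale^~ v: a b / a + b}.
Proof. by move=> *; apply: op_ext => *; rewrite /= /Oscale_f /Oadd_f /vscale /vadd scalerDl. Qed.
HB.instance Definition _ := GRing.Zmodule_isLmodule.Build F Op OscaleA Oscale1 OscaleDr OscaleDl.
Lemma OscaleAl a (f g : Op) : a *: (f * g) = (a *: f) * g.
Proof. by apply: op_ext. Qed.
HB.instance Definition _ := GRing.Lmodule_isLalgebra.Build F Op OscaleAl.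
Lemma OscaleAr a (f g : Op) : a *: (f * g) = f * (a *: g).
Proof. by apply: op_ext => v i j; rewrite /= /Omul_f /Oscale_f (op_scale f). Qed.
HB.instance Definition _ := GRing.Lalgebra_isAlgebra.Build F Op OscaleAr.

Lemma OmulE (f g : Op) v : (f * g) v = f (g v). Proof. by []. Qed.
Lemma OaddE (f g : Op) v i j : (f + g) v i j = f v i j + g v i j. Proof. by []. Qed.
Lemma O0E v i j : (0 : Op) v i j = 0. Proof. by []. Qed.
Lemma O1E v : (1 : Op) v = v. Proof. by []. Qed.
Lemma OscaleE a (f : Op) v i j : (a *: f) v i j = a *: f v i j. Proof. by []. Qed.
End Vec.
Section AlgHom.
Context (F : fieldType) (A B : algType F) (f : A -> B) (fH : is_alg_hom f).
Lemma ah_add x y : f (x + y) = f x + f y.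
Proof. by have [L _ _] := fH; rewrite -[x]scale1r L !scale1r. Qed.
Lemma ah0 : f 0 = 0.
Proof. by have := ah_add 0 0; rewrite addr0 => /(congr1 (fun z => z - f 0)); rewrite subrr addrK. Qed.
Lemma ah_scale a x : f (a *: x) = a *: f x.
Proof. by have [L _ _] := fH; rewrite -[a *: x]addr0 L ah0 addr0. Qed.
Lemma ah_opp x : f (- x) = - f x.
Proof. by rewrite -scaleN1r ah_scale scaleN1r. Qed.
Lemma ah_sub x y : f (x - y) = f x - f y.
Proof. by rewrite ah_add ah_opp. Qed.
Lemma ah1 : f 1 = 1. Proof. by have [_ ? ?] := fH. Qed.
Lemma ah_mul x y : f (x * y) = f x * f y. Proof. by have [_ ? ?] := fH. Qed.
Lemma ah_exp x n : f (x ^+ n) = f x ^+ n.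
Proof. by elim: n => [|n IH]; rewrite ?expr0 ?ah1 // !exprS ah_mul IH. Qed.
Lemma ah_sum (I : Type) (r : seq I) (G : I -> A) :
  f (\sum_(i <- r) G i) = \sum_(i <- r) f (G i).
Proof. by elim: r => [|a r IH]; rewrite ?big_nil ?ah0 // !big_cons ah_add IH. Qed.
End AlgHom.

Lemma ah_comp (F : fieldType) (A B C : algType F) (f : A -> B) (g : B -> C) :
  is_alg_hom f -> is_alg_hom g -> is_alg_hom (g \o f).
Proof.
move=> fH gH; split=> /=.
- by move=> a x y; have [-> _ _] := fH; rewrite (ah_add gH) (ah_scale gH).
- by rewrite (ah1 fH) (ah1 gH).
- by move=> x y; rewrite (ah_mul fH) (ah_mul gH).
Qed.

Lemma ah_id (F : fieldType) (A : algType F) : is_alg_hom (@id A).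
Proof. by split. Qed.

Lemma ah_iter (F : fieldType) (A : algType F) (f : A -> A) n :
  is_alg_hom f -> is_alg_hom (iter n f).
Proof.
move=> fH; elim: n => [|n IH]; first exact: ah_id.
by have := ah_comp IH fH.
Qed.

Section Rep.
Context (F : fieldType) (H : comAlgType F) (theta : H -> H) (z0 z1 : H).
Hypothesis thH : is_alg_hom theta.

Definition th n := iter n theta.
Lemma thnH n : is_alg_hom (th n). Proof. exact: ah_iter. Qed.
Lemma thS n x : th n.+1 x = theta (th n x). Proof. by []. Qed.
Lemma thSr n x : th n.+1 x = th n (theta x). Proof. by rewrite /th iterSr. Qed.

Definition hop (h : H) (v : VV H) : VV H := fun i j => th i h * v i j.
Definition dop (v : VV H) : VV H := fun i j => if i is i'.+1 then v i' j else 0.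
Fixpoint alpha (i : nat) : H := if i is i'.+1 then th i' z1 * alpha i' else 1.
Fixpoint beta (i : nat) : H := if i is i'.+1 then th i'.+1 z0 + th i' z1 * beta i' else z0.
Definition uop (v : VV H) : VV H := fun i j =>
  alpha i * (if j is j'.+1 then theta (v i j') else 0) + beta i * v i.+1 j.

Lemma hop_lin h : islin (hop h).
Proof.
split=> [x y|a x]; apply: vext => i j; rewrite /hop /vadd /vscale.
  by rewrite mulrDr.
by rewrite scalerAr.
Qed.
Lemma dop_lin : islin dop.
Proof.
split=> [x y|a x]; apply: vext => [[|i]] j; rewrite /dop /vadd /vscale //.
  by rewrite addr0.
by rewrite scaler0.
Qed.
Lemma uop_lin : islin uop.
Proof.
split=> [x y|a x]; apply: vext => i [|j]; rewrite /uop /vadd /vscale.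
- by rewrite !mulr0 !add0r mulrDr.
- by rewrite (ah_add thH) !mulrDr addrACA.
- by rewrite !mulr0 !add0r scalerAr.
- by rewrite (ah_scale thH) scalerDr !scalerAr.
Qed.

Definition iB (h : H) : Op H := mkOp (hop_lin h).
Definition dB : Op H := mkOp dop_lin.
Definition uB : Op H := mkOp uop_lin.

Lemma iB_hom : is_alg_hom iB.
Proof.
split.
- move=> a x y; apply: op_ext => v i j.
  by rewrite OaddE OscaleE /= /hop (ah_add (thnH i)) (ah_scale (thnH i)) mulrDl scalerAl.
- by apply: op_ext => v i j; rewrite /= /hop (ah1 (thnH i)) mul1r.
- by move=> x y; apply: op_ext => v i j; rewrite OmulE /= /hop (ah_mul (thnH i)) mulrA.
Qed.

Lemma B_rel : gwa_rel theta z0 z1 iB dB uB.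
Proof.
split.
- move=> h; apply: op_ext => v i j; rewrite !OmulE /= /uop /hop -thSr thS.
  case: j => [|j]; rewrite ?mulr0 ?add0r.
    by rewrite mulrCA.
  rewrite (ah_mul thH) mulrDr; congr (_ + _); by rewrite mulrCA.
- move=> h; apply: op_ext => v [|i] j; rewrite !OmulE /= /dop /hop ?mulr0 //.
  by rewrite thSr.
- apply: op_ext => v i j; rewrite OaddE !OmulE /= /uop /dop /hop /=.
  case: i => [|i] /=.
    by case: j => [|j] /=; rewrite ?(ah0 thH) mul1r add0r addr0.
  ring.
Qed.
Hypothesis thI : injective theta.
Hypothesis z1U : is_unit_elt z1.

Lemma alpha_reg i x : alpha i * x = 0 -> x = 0.
Proof.
have [y zy] := z1U.
have : exists w, alpha i * w = 1.
  elim: i => [|i [w Hw]]; first by exists 1; rewrite mulr1.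
  exists (th i y * w); rewrite /= mulrACA -(ah_mul (thnH i)) zy (ah1 (thnH i)) mul1r //.
case=> w Hw E; by rewrite -[x]mul1r -Hw mulrAC E mul0r.
Qed.

Definition bnd (J : nat) (v : VV H) := forall p q, (J <= q)%N -> v p q = 0.

Lemma dop_bnd J v : bnd J v -> bnd J (dop v).
Proof. by move=> B [|p] q Hq; rewrite /dop // B. Qed.
Lemma uop_bnd J v : bnd J v -> bnd J.+1 (uop v).
Proof.
move=> B p [|q] Hq //; rewrite /uop (B p q) // (B p.+1 q.+1) ?(ah0 thH) ?mulr0 ?addr0 //.
by apply: ltnW.
Qed.
Lemma dop_inj v : dop v = vzero H -> v = vzero H.
Proof. by move=> E; apply: vext => p q; have := congr1 (fun w => w p.+1 q) E. Qed.
Lemma uop_inj J v : bnd J v -> uop v = vzero H -> v = vzero H.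
Proof.
elim: J v => [|J IH] v B E.
  by apply: vext => p q; apply: B.
apply: (IH v _ E) => p q; rewrite leq_eqVlt => /orP [/eqP <-|]; last by apply: B.
have := congr1 (fun w => w p J.+1) E; rewrite /uop /vzero (B _ J.+1) // mulr0 addr0.
by move/alpha_reg; rewrite -{1}(ah0 thH) => /thI.
Qed.

Lemma dop_pow_inj k v : iter k dop v = vzero H -> v = vzero H.
Proof. by elim: k v => [|k IH] v //= /dop_inj /IH. Qed.
Lemma dop_pow_bnd k J v : bnd J v -> bnd J (iter k dop v).
Proof. by elim: k => [|k IH] //= B; apply/dop_bnd/IH. Qed.
Lemma uop_pow_bnd k J v : bnd J v -> bnd (k + J) (iter k uop v).
Proof. by elim: k => [|k IH] //= B; apply/uop_bnd/IH. Qed.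
Lemma uop_pow_inj k J v : bnd J v -> iter k uop v = vzero H -> v = vzero H.
Proof.
elim: k v J => [|k IH] v J //= B E; apply: (IH v J B).
exact: (uop_inj (uop_pow_bnd (k:=k) B) E).
Qed.

Lemma dB_pow k v : (dB ^+ k) v = iter k dop v.
Proof. by elim: k => [|k IH] //; rewrite exprS OmulE IH. Qed.
Lemma uB_pow k v : (uB ^+ k) v = iter k uop v.
Proof. by elim: k => [|k IH] //; rewrite exprS OmulE IH. Qed.

Definition ev0 (h : H) (i : nat) : VV H := fun p q => if (p == 0%N) && (q == i) then h else 0.
Lemma uop_ev0 i : uop (ev0 1 i) = ev0 1 i.+1.
Proof.
apply: vext => p [|q]; rewrite /uop /ev0 /= !mulr0 addr0.
  by case: (p == 0%N).
rewrite eqSS; case: p => [|p] /=; last by rewrite (ah0 thH) mulr0.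
by case: (q == i); rewrite ?(ah1 thH) ?(ah0 thH) ?mulr1 ?mulr0.
Qed.
Lemma iter_dop k v p q : iter k dop v p q = if (k <= p)%N then v (p - k)%N q else 0.
Proof.
elim: k p => [|k IH] p; first by rewrite subn0.
by case: p => [|p] //=; rewrite IH ?ltnS ?subSS.
Qed.

Definition diagv (c : nat -> H) (N : nat) : VV H :=
  fun p q => if (p == q) && (p < N)%N then c p else 0.

Lemma term_e00 (c : nat -> H) i :
  (dB ^+ i * iB (c i) * uB ^+ i) (ev0 1 0) = fun p q => if (p == i) && (q == i) then c i else 0.
Proof.
rewrite !OmulE dB_pow uB_pow.
have -> : iter i uop (ev0 1 0) = ev0 1 i.
  by elim: i {c} => [|i IH] //=; rewrite IH uop_ev0.
apply: vext => p q; rewrite iter_dop /= /hop /ev0.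
case: (ltnP p i) => Hp.
  by have -> : (p == i) = false by apply/negbTE; rewrite ltn_eqF.
rewrite subn_eq0.
have -> : (p <= i)%N = (p == i) by rewrite eqn_leq Hp andbT.
case: (eqVneq p i) => [->|pi] /=; last by rewrite mulr0.
by rewrite subnn; case: (q == i); rewrite /= ?mulr1 ?mulr0.
Qed.

Lemma sum_e00 (c : nat -> H) N :
  (\sum_(i < N) dB ^+ i * iB (c i) * uB ^+ i) (ev0 1 0) = diagv c N.
Proof.
apply: vext => p q.
rewrite (big_morph (fun g : Op H => g (ev0 1 0) p q) (id1 := 0) (op1 := +%R)) //.
under eq_bigr => i _ do rewrite term_e00.
elim: N => [|N IH]; first by rewrite big_ord0 /diagv andbF.
rewrite big_ord_recr /= IH /diagv.
case: (eqVneq p N) => [->|pN] /=.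
  rewrite ltnn leqnn andbF andbT add0r eq_sym.
  by case: (q == N).
by rewrite addr0 ltnS (leq_eqVlt p N) (negbTE pN).
Qed.
End Rep.
Lemma Forall_mapX (T U : Type) (f : T -> U) (P : U -> Prop) (Q : T -> Prop) (l : seq T) :
  List.Forall Q l -> (forall x, Q x -> P (f x)) -> List.Forall P (map f l).
Proof. by move=> FQ QP; elim: FQ => [|x l0 Qx _ IH] /=; constructor; auto. Qed.
Lemma Forall_catX (T : Type) (P : T -> Prop) (l1 l2 : seq T) :
  List.Forall P l1 -> List.Forall P l2 -> List.Forall P (l1 ++ l2).
Proof. by move=> F1 F2; elim: F1 => [|x l0 Px _ IH] //=; constructor. Qed.

Section GWA.
Context (F : fieldType) (H : comAlgType F) (theta : H -> H) (z0 z1 : H)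
  (A : algType F) (iota : H -> A) (d u : A).
Hypothesis thH : is_alg_hom theta.
Variable thi : H -> H.
Hypothesis thK : cancel theta thi.
Hypothesis thiK : cancel thi theta.
Hypothesis z1U : is_unit_elt z1.
Hypothesis iH : is_alg_hom iota.
Hypothesis R1 : forall h : H, u * iota h = iota (theta h) * u.
Hypothesis R2 : forall h : H, iota h * d = d * iota (theta h).
Hypothesis R3 : u * d = iota z0 + d * iota z1 * u.

Local Notation HD := (in_Hdu iota d u).
Local Notation GC := (gwa_comp iota d u).
Local Notation ev := (Hdu_eval iota d u).
Local Notation gev := (gword_eval iota d u).

Lemma HD0 : HD 0.
Proof. by exists [::]; rewrite big_nil. Qed.
Lemma HDD x y : HD x -> HD y -> HD (x + y).
Proof. by move=> [s1 ->] [s2 ->]; exists (s1 ++ s2); rewrite big_cat. Qed.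
Lemma HDZ a x : HD x -> HD (a *: x).
Proof.
move=> [s ->]; exists (map (fun p => (a * p.1, p.2)) s).
by rewrite big_map scaler_sumr; apply: eq_bigr => p _; rewrite scalerA.
Qed.
Lemma HDB x y : HD x -> HD y -> HD (x - y).
Proof. by move=> Hx Hy; apply: HDD Hx _; rewrite -scaleN1r; apply: HDZ. Qed.
Lemma ev_cat w1 w2 : ev (w1 ++ w2) = ev w1 * ev w2.
Proof. by elim: w1 => [|o w IH] /=; rewrite ?mul1r // IH mulrA. Qed.
Lemma HD_ev w : HD (ev w).
Proof. by exists [:: (1, w)]; rewrite big_seq1 scale1r. Qed.

Lemma HD_ind (P : A -> Prop) : P 0 -> (forall x y, P x -> P y -> P (x + y)) ->
  (forall a x, P x -> P (a *: x)) -> (forall w, P (ev w)) -> forall x, HD x -> P x.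
Proof.
move=> P0 PD PZ Pw x [s ->]; elim: s => [|p s IH]; rewrite ?big_nil ?big_cons //.
by apply: PD => //; apply: PZ.
Qed.

Lemma HDM x y : HD x -> HD y -> HD (x * y).
Proof.
move=> Hx [s ->]; move: x Hx; apply: HD_ind.
- by rewrite mul0r; apply: HD0.
- by move=> x1 x2 H1 H2; rewrite mulrDl; apply: HDD.
- by move=> a x Hx; rewrite -scalerAl; apply: HDZ.
move=> w; exists (map (fun q => (q.1, w ++ q.2)) s).
rewrite big_map mulr_sumr; apply: eq_bigr => q _; by rewrite ev_cat scalerAr.
Qed.
Lemma HD1 : HD 1. Proof. exact: (HD_ev [::]). Qed.
Lemma HDi h : HD (iota h). Proof. by have := HD_ev [:: Some h]; rewrite /= mulr1. Qed.
Lemma HDdu : HD (d * u). Proof. by have := HD_ev [:: None]; rewrite /= mulr1. Qed.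

Lemma ev_ind (P : A -> Prop) : P 1 -> (forall h x, P x -> P (iota h * x)) ->
  (forall x, P x -> P (d * u * x)) -> forall w, P (ev w).
Proof. by move=> P1 Ph Pdu; elim=> [|[h|] w IH] //=; [apply: Ph | apply: Pdu]. Qed.

Lemma thI : injective theta. Proof. exact: can_inj thK. Qed.
Lemma thi_mul x y : thi (x * y) = thi x * thi y.
Proof. by apply: thI; rewrite (ah_mul thH) !thiK. Qed.
Lemma thi1 : thi 1 = 1.
Proof. by apply: thI; rewrite (ah1 thH) thiK. Qed.

Lemma d_iota h : d * iota h = iota (thi h) * d.
Proof. by rewrite R2 thiK. Qed.

Lemma ud_HD : HD (u * d).
Proof.
rewrite R3 (d_iota z1) -mulrA.
by apply: HDD; [apply: HDi | apply: HDM; [apply: HDi | apply: HDdu]].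
Qed.

Lemma comm_d x : HD x -> exists2 x', HD x' & d * x = x' * d.
Proof.
move: x; apply: (HD_ind (P := fun x => exists2 x', HD x' & d * x = x' * d)).
- by exists 0; rewrite ?mulr0 ?mul0r //; apply: HD0.
- move=> x1 x2 [y1 H1 E1] [y2 H2 E2]; exists (y1 + y2); first by apply: HDD.
  by rewrite mulrDr mulrDl E1 E2.
- move=> a x [y Hy E]; exists (a *: y); first by apply: HDZ.
  by rewrite -scalerAr -scalerAl E.
apply: (ev_ind (P := fun x => exists2 x', HD x' & d * x = x' * d)).
- by exists 1; rewrite ?mulr1 ?mul1r //; apply: HD1.
- move=> h x [y Hy E]; exists (iota (thi h) * y); first by apply: HDM => //; apply: HDi.
  by rewrite mulrA d_iota -!mulrA E.
move=> x [y Hy E].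
have [y1 zy1] := z1U.
pose c := thi (thi y1).
exists ((iota c * (d * u - iota (thi z0))) * y).
  by apply: HDM => //; apply: HDM; [apply: HDi | apply: HDB; [apply: HDdu | apply: HDi]].
suff key : d * (d * u) = iota c * (d * u - iota (thi z0)) * d.
  by rewrite mulrA key -mulrA E !mulrA.
have E2 : d * u * d = iota (thi z0) * d + iota (thi (thi z1)) * (d * (d * u)).
  rewrite -mulrA R3 mulrDr d_iota !mulrA; congr (_ + _).
  by rewrite -[d * d * _]mulrA (d_iota z1) mulrA d_iota.
rewrite -mulrA mulrBl E2 addrC addKr [RHS]mulrA -(ah_mul iH).
by rewrite /c -thi_mul -thi_mul mulrC zy1 !thi1 (ah1 iH) mul1r.
Qed.

Lemma comm_u x : HD x -> exists2 x', HD x' & u * x = x' * u.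
Proof.
move: x; apply: (HD_ind (P := fun x => exists2 x', HD x' & u * x = x' * u)).
- by exists 0; rewrite ?mulr0 ?mul0r //; apply: HD0.
- move=> x1 x2 [y1 H1 E1] [y2 H2 E2]; exists (y1 + y2); first by apply: HDD.
  by rewrite mulrDr mulrDl E1 E2.
- move=> a x [y Hy E]; exists (a *: y); first by apply: HDZ.
  by rewrite -scalerAr -scalerAl E.
apply: (ev_ind (P := fun x => exists2 x', HD x' & u * x = x' * u)).
- by exists 1; rewrite ?mulr1 ?mul1r //; apply: HD1.
- move=> h x [y Hy E]; exists (iota (theta h) * y); first by apply: HDM => //; apply: HDi.
  by rewrite mulrA R1 -!mulrA E.
move=> x [y Hy E]; exists (u * d * y); first by apply: HDM => //; apply: ud_HD.
by rewrite !mulrA -[u * d * u * x]mulrA E mulrA.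
Qed.
Lemma comm_gen x : HD x -> (forall h, iota h * x = x * iota h) /\ d * u * x = x * (d * u).
Proof.
move: x; apply: (HD_ind (P := fun x => (forall h, iota h * x = x * iota h) /\ d * u * x = x * (d * u))).
- by split=> [h|]; rewrite mulr0 mul0r.
- by move=> x y [Ex Ex'] [Ey Ey']; split=> [h|]; rewrite mulrDr mulrDl ?Ex ?Ey // Ex' Ey'.
- by move=> a x [Ex Ex']; split=> [h|]; rewrite -scalerAr -scalerAl ?Ex // Ex'.
have ih h h' : iota h * iota h' = iota h' * iota h by rewrite -!(ah_mul iH) mulrC.
have idu h : iota h * (d * u) = d * u * iota h by rewrite mulrA R2 -mulrA -R1 mulrA.
apply: (ev_ind (P := fun x => (forall h, iota h * x = x * iota h) /\ d * u * x = x * (d * u))).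
- by split=> [h|]; rewrite mulr1 mul1r.
- move=> h x [Ex Ex']; split=> [h'|].
    by rewrite mulrA ih -mulrA Ex mulrA.
  by rewrite mulrA -idu -mulrA Ex' mulrA.
move=> x [Ex Ex']; split=> [h|].
  by rewrite mulrA idu -mulrA Ex mulrA.
by rewrite Ex' mulrA Ex'.
Qed.

Lemma HDcomm x y : HD x -> HD y -> x * y = y * x.
Proof.
move=> Hx Hy; move: x Hx; apply: (HD_ind (P := fun x => x * y = y * x)).
- by rewrite mulr0 mul0r.
- by move=> x1 x2 E1 E2; rewrite mulrDr mulrDl E1 E2.
- by move=> a x E; rewrite -scalerAr -scalerAl E.
have [Eh Edu] := comm_gen Hy.
apply: (ev_ind (P := fun x => x * y = y * x)).
- by rewrite mulr1 mul1r.
- by move=> h x E; rewrite -mulrA E mulrA Eh !mulrA.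
by move=> x E; rewrite -mulrA E mulrA Edu !mulrA.
Qed.

Lemma HD_ud n : HD (u ^+ n * d ^+ n).
Proof.
elim: n => [|n IH]; first by rewrite !expr0 mulr1; apply: HD1.
have [y Hy E] := comm_u IH.
by rewrite exprS exprSr mulrA -(mulrA u) E -mulrA; apply: HDM => //; apply: ud_HD.
Qed.
Lemma HD_du n : HD (d ^+ n * u ^+ n).
Proof.
elim: n => [|n IH]; first by rewrite !expr0 mulr1; apply: HD1.
have [y Hy E] := comm_d IH.
by rewrite exprS exprSr mulrA -(mulrA d) E -mulrA; apply: HDM => //; apply: HDdu.
Qed.
Fixpoint aa i := if i is i'.+1 then theta (aa i') * z1 else 1.
Fixpoint bb i := if i is i'.+1 then aa i' * z0 + theta (bb i') else 0.

Lemma iota_dpow h i : iota h * d ^+ i = d ^+ i * iota (th theta i h).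
Proof.
elim: i h => [|i IH] h; first by rewrite !expr0 mulr1 mul1r.
by rewrite exprS mulrA R2 -mulrA IH mulrA /th iterSr.
Qed.

Lemma dud i : d * u * d ^+ i = d ^+ i.+1 * iota (aa i) * u + d ^+ i * iota (bb i).
Proof.
elim: i => [|i IH].
  by rewrite expr0 expr1 mulr1 /= (ah1 iH) (ah0 iH) mulr1 mulr0 addr0.
rewrite [in LHS]exprSr mulrA IH mulrDl.
have T1 : d ^+ i.+1 * iota (aa i) * u * d =
   d ^+ i.+1 * iota (aa i * z0) + d ^+ i.+2 * iota (theta (aa i) * z1) * u.
  rewrite -mulrA R3 mulrDr; congr (_ + _); first by rewrite (ah_mul iH) mulrA.
  rewrite (ah_mul iH) !mulrA -(mulrA _ (iota (aa i)) d) R2 !mulrA.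
  by rewrite -[d ^+ i.+1 * d]exprSr.
have T2 : d ^+ i * iota (bb i) * d = d ^+ i.+1 * iota (theta (bb i)).
  by rewrite -mulrA R2 mulrA -exprSr.
by rewrite T1 T2 /= (ah_add iH) mulrDr addrAC addrC.
Qed.

Definition nf (c : nat -> H) (N : nat) : A := \sum_(i < N) d ^+ i * iota (c i) * u ^+ i.
Definition NF (z : A) := exists N c, (forall i, (N <= i)%N -> c i = 0) /\ z = nf c N.

Lemma nf_ext c N k : (forall i, (N <= i)%N -> c i = 0) -> nf c (N + k) = nf c N.
Proof.
move=> cN; elim: k => [|k IH]; first by rewrite addn0.
rewrite addnS /nf big_ord_recr /= -/(nf c (N + k)) IH cN ?leq_addr //.
by rewrite (ah0 iH) mulr0 mul0r addr0.
Qed.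

Lemma NF0 : NF 0.
Proof. by exists 0%N, (fun _ => 0); split => //; rewrite /nf big_ord0. Qed.
Lemma NFD x y : NF x -> NF y -> NF (x + y).
Proof.
move=> [N [c [cN ->]]] [M [c' [cM ->]]].
exists (N + M)%N, (fun i => c i + c' i); split.
  move=> i Hi; rewrite cN ?cM ?addr0 //; apply: leq_trans Hi; by rewrite ?leq_addr ?leq_addl.
rewrite -(nf_ext M cN) -(nf_ext N cM) [(M + N)%N]addnC /nf -big_split /=.
by apply: eq_bigr => i _; rewrite (ah_add iH) mulrDr mulrDl.
Qed.
Lemma NFZ a x : NF x -> NF (a *: x).
Proof.
move=> [N [c [cN ->]]]; exists N, (fun i => a *: c i); split.
  by move=> i Hi; rewrite cN ?scaler0.
rewrite /nf scaler_sumr; apply: eq_bigr => i _.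
by rewrite (ah_scale iH) scalerAl scalerAr.
Qed.
Lemma NFh h x : NF x -> NF (iota h * x).
Proof.
move=> [N [c [cN ->]]]; exists N, (fun i => th theta i h * c i); split.
  by move=> i Hi; rewrite cN ?mulr0.
rewrite /nf mulr_sumr; apply: eq_bigr => i _.
by rewrite !mulrA iota_dpow (ah_mul iH) !mulrA.
Qed.
Lemma NFdu x : NF x -> NF (d * u * x).
Proof.
move=> [N [c [cN ->]]].
exists N.+1, (fun k => bb k * c k + (if k is k'.+1 then aa k' * theta (c k') else 0)); split.
  move=> [|k] Hk //; rewrite cN ?mulr0 ?add0r; last by apply: ltnW.
  by rewrite cN // (ah0 thH) mulr0.
rewrite /nf mulr_sumr.
set X := fun k : nat => if k is k'.+1 then aa k' * theta (c k') else 0.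
have -> : \sum_(i < N.+1) d ^+ i * iota (bb i * c i + X i) * u ^+ i
  = \sum_(i < N.+1) d ^+ i * iota (bb i * c i) * u ^+ i +
    \sum_(i < N.+1) d ^+ i * iota (X i) * u ^+ i.
  by rewrite -big_split; apply: eq_bigr => i _; rewrite (ah_add iH) mulrDr mulrDl.
rewrite big_ord_recr /= cN // mulr0 (ah0 iH) mulr0 mul0r addr0.
rewrite big_ord_recl /= (ah0 iH) mulr0 mul0r add0r.
rewrite addrC -big_split; apply: eq_bigr => i _ /=.
rewrite !mulrA dud !mulrDl; congr (_ + _).
  rewrite -!mulrA; congr (_ * _); rewrite (ah_mul iH) -!mulrA; congr (_ * _).
  by rewrite mulrA R1 -mulrA -exprS.
by rewrite (ah_mul iH) mulrA.
Qed.
Lemma NF1 : NF 1.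
Proof.
exists 1%N, (fun i => if i == 0%N then 1 else 0); split.
  by case.
by rewrite /nf big_ord1 /= (ah1 iH) !expr0 !mulr1.
Qed.

Lemma HD_NF z : HD z -> NF z.
Proof.
move: z; apply: HD_ind; [exact: NF0 | exact: NFD | exact: NFZ |].
apply: ev_ind; [exact: NF1 | exact: NFh | exact: NFdu].
Qed.
Lemma gev_cat w1 w2 : gev (w1 ++ w2) = gev w1 * gev w2.
Proof. by elim: w1 => [|l w IH] /=; rewrite ?mul1r // IH mulrA. Qed.
Lemma gdeg_cat (w1 w2 : seq (gletter H)) : gword_deg (w1 ++ w2) = gword_deg w1 + gword_deg w2.
Proof. by rewrite /gword_deg big_cat. Qed.

Lemma GC0 m : GC m 0.
Proof. by exists [::]; rewrite big_nil. Qed.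
Lemma GCD m x y : GC m x -> GC m y -> GC m (x + y).
Proof. by move=> [s1 [F1 ->]] [s2 [F2 ->]]; exists (s1 ++ s2); rewrite big_cat; split => //; apply: Forall_catX. Qed.
Lemma GCZ m a x : GC m x -> GC m (a *: x).
Proof.
move=> [s [Fs ->]]; exists (map (fun p => (a * p.1, p.2)) s); split.
  by apply: Forall_mapX Fs _.
by rewrite big_map scaler_sumr; apply: eq_bigr => p _; rewrite scalerA.
Qed.
Lemma GC_word w : GC (gword_deg w) (gev w).
Proof. by exists [:: (1, w)]; rewrite big_seq1 scale1r; split => //; constructor. Qed.
Lemma GCM m n x y : GC m x -> GC n y -> GC (m + n) (x * y).
Proof.
move=> [s [Fs ->]] [t [Ft ->]].
elim: Fs => [|p s0 Hp _ IH]; first by rewrite big_nil mul0r; apply: GC0.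
rewrite big_cons mulrDl; apply: GCD => //.
rewrite -scalerAl; apply: GCZ; rewrite mulr_sumr.
exists (map (fun q => (q.1, p.2 ++ q.2)) t); split.
  by apply: Forall_mapX Ft _ => q /= Hq; rewrite gdeg_cat Hp Hq.
by rewrite big_map; apply: eq_bigr => q _; rewrite gev_cat scalerAr.
Qed.
Lemma GCi h : GC 0 (iota h).
Proof. by have := GC_word [:: LH h]; rewrite /= mulr1 /gword_deg big_seq1. Qed.
Lemma GCd : GC (-1) d.
Proof. by have := GC_word [:: LD]; rewrite /= mulr1 /gword_deg big_seq1. Qed.
Lemma GCu : GC 1 u.
Proof. by have := GC_word [:: LU]; rewrite /= mulr1 /gword_deg big_seq1. Qed.
Lemma GC1 : GC 0 1.
Proof. by have := GC_word [::]; rewrite /= /gword_deg big_nil. Qed.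

Lemma GC_HD x : HD x -> GC 0 x.
Proof.
move: x; apply: HD_ind; [exact: GC0 | exact: GCD | exact: GCZ |].
apply: ev_ind; first exact: GC1.
  by move=> h x Hx; have := GCM (GCi h) Hx; rewrite addr0.
move=> x Hx; have := GCM (GCM GCd GCu) Hx; by rewrite addNr addr0.
Qed.

Definition W (m : int) : A := match m with Posz n => u ^+ n | Negz n => d ^+ n.+1 end.

Lemma GC_W m : GC m (W m).
Proof.
case: m => n /=.
  elim: n => [|n IH]; first by rewrite expr0; apply: GC1.
  by have := GCM GCu IH; rewrite -exprS; have -> : (1 + Posz n = Posz n.+1 :> int) by lia.
have : GC (- Posz n.+1) (d ^+ n.+1).
  elim: n.+1 => [|k IH]; first by rewrite expr0 oppr0; apply: GC1.
  by have := GCM GCd IH; rewrite -exprS; have -> : (-1 + - Posz k = - Posz k.+1 :> int) by lia.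
by have -> : (- Posz n.+1 = Negz n :> int) by lia.
Qed.

Definition S m y := exists2 x, HD x & y = x * W m.

Lemma S0 m : S m 0. Proof. by exists 0; rewrite ?mul0r //; apply: HD0. Qed.
Lemma SD m x y : S m x -> S m y -> S m (x + y).
Proof. by move=> [a Ha ->] [b Hb ->]; exists (a + b); rewrite ?mulrDl //; apply: HDD. Qed.
Lemma SZ m c x : S m x -> S m (c *: x).
Proof. by move=> [a Ha ->]; exists (c *: a); rewrite ?scalerAl //; apply: HDZ. Qed.
Lemma Sh m h y : S m y -> S m (iota h * y).
Proof. by move=> [a Ha ->]; exists (iota h * a); rewrite ?mulrA //; apply: HDM => //; apply: HDi. Qed.
Lemma Sd m y : S m y -> S (-1 + m) (d * y).
Proof.
move=> [a Ha ->]; have [a' Ha' E] := comm_d Ha.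
rewrite mulrA E; case: m => [[|n]|n] /=.
- have -> : (-1 + Posz 0 = Negz 0 :> int) by lia.
  by exists a' => //=; rewrite expr0 mulr1 expr1.
- have -> : (-1 + Posz n.+1 = Posz n :> int) by lia.
  exists (a' * (d * u)); first by apply: HDM => //; apply: HDdu.
  by rewrite exprS !mulrA.
- have -> : (-1 + Negz n = Negz n.+1 :> int) by lia.
  by exists a' => //=; rewrite [d ^+ n.+2]exprS mulrA.
Qed.
Lemma Su m y : S m y -> S (1 + m) (u * y).
Proof.
move=> [a Ha ->]; have [a' Ha' E] := comm_u Ha.
rewrite mulrA E; case: m => [n|[|n]] /=.
- have -> : (1 + Posz n = Posz n.+1 :> int) by lia.
  by exists a' => //=; rewrite exprS mulrA.
- have -> : (1 + Negz 0 = Posz 0 :> int) by lia.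
  exists (a' * (u * d)); first by apply: HDM => //; apply: ud_HD.
  by rewrite /= expr0 expr1 mulr1 mulrA.
- have -> : (1 + Negz n.+1 = Negz n :> int) by lia.
  exists (a' * (u * d)); first by apply: HDM => //; apply: ud_HD.
  by rewrite /= [d ^+ n.+2]exprS !mulrA.
Qed.

Lemma S_word w : S (gword_deg w) (gev w).
Proof.
elim: w => [|l w IH].
  exists 1; first exact: HD1.
  by rewrite /gword_deg big_nil /= mul1r expr0.
rewrite /gword_deg big_cons -/(gword_deg w) /=.
case: l => [h||] /=.
- by rewrite add0r; apply: Sh.
- by apply: Sd.
- by apply: Su.
Qed.

Lemma GC_S m y : GC m y -> S m y.
Proof.
move=> [s [Fs ->]]; elim: Fs => [|p s0 Hp _ IH]; first by rewrite big_nil; apply: S0.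
rewrite big_cons; apply: SD => //; apply: SZ; rewrite -Hp; apply: S_word.
Qed.
Hypothesis univ : gwa_universal theta z0 z1 iota d u.

Lemma core z n : HD z ->
  (u ^+ n * (d ^+ n * z) = 0 \/ d ^+ n * (u ^+ n * z) = 0) -> z = 0.
Proof.
move=> Hz E.
have [f [fH fi fd fu _]] := univ (iB_hom thH) (B_rel z0 z1 thH).
have [N [c [cN Ez]]] := HD_NF Hz.
have fz : f z (ev0 1 0) = diagv c N.
  rewrite Ez /nf (ah_sum fH) -(sum_e00 z0 z1 thH); congr (opf _ _).
  apply: eq_bigr => i _; by rewrite !(ah_mul fH) !(ah_exp fH) fi fd fu.
have bd : bnd N (diagv c N).
  move=> p q Hq; rewrite /diagv; case: (eqVneq p q) => [->|] //=.
  by rewrite ltnNge Hq.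
have dz : diagv c N = vzero H.
  case: E => E.
  - have := congr1 (fun g : Op H => g (ev0 1 0)) (congr1 f E).
    rewrite (ah0 fH) !(ah_mul fH) !(ah_exp fH) fd fu !OmulE uB_pow dB_pow fz.
    move/(uop_pow_inj thH thI z1U (dop_pow_bnd n bd)).
    exact: dop_pow_inj.
  - have := congr1 (fun g : Op H => g (ev0 1 0)) (congr1 f E).
    rewrite (ah0 fH) !(ah_mul fH) !(ah_exp fH) fd fu !OmulE uB_pow dB_pow fz.
    move/dop_pow_inj.
    exact: (uop_pow_inj thH thI z1U bd).
rewrite Ez /nf big1 // => i _.
have := congr1 (fun w : VV H => w (i : nat) (i : nat)) dz; rewrite /diagv /vzero eqxx ltn_ord /= => ->.
by rewrite (ah0 iH) mulr0 mul0r.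
Qed.

Lemma main m : exists phi : A -> A, left_mod_iso HD HD (GC m) phi.
Proof.
exists (fun x => x * W m); split.
- by move=> x Hx; have := GCM (GC_HD Hx) (GC_W m); rewrite add0r.
- by move=> x y _ _; rewrite mulrDl.
- by move=> r x _ _; rewrite mulrA.
- move=> x y Hx Hy E.
  have Hz : HD (x - y) by apply: HDB.
  have Ez : (x - y) * W m = 0 by rewrite mulrBl E subrr.
  apply/eqP; rewrite -subr_eq0; apply/eqP.
  clear E; case: m Ez => n /= Ez.
  + apply: (core (n := n) Hz); left.
    by rewrite mulrA (HDcomm (HD_ud n) Hz) mulrA Ez mul0r.
  + apply: (core (n := n.+1) Hz); right.
    by rewrite mulrA (HDcomm (HD_du n.+1) Hz) mulrA Ez mul0r.
- by move=> y /GC_S [x Hx ->]; exists x.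
Qed.
End GWA.

Theorem proposition2p4 (F : fieldType) (H : comAlgType F) (theta : H -> H)
    (z0 z1 : H) (A : algType F) (iota : H -> A) (d u : A) :
  is_alg_hom theta -> bijective theta -> is_unit_elt z1 ->
  is_gwa theta z0 z1 iota d u ->
  forall m : int, exists phi : A -> A,
    left_mod_iso (in_Hdu iota d u) (in_Hdu iota d u) (gwa_comp iota d u m) phi.
Proof.
move=> thH [thi thK thiK] z1U [iH [[R1 R2 R3] univ]] m.
exact: (main thH thK thiK z1U iH R1 R2 R3 univ).
Qed.
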